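(* Let $\mathcal E$ be an exchangeability system for a noncommutative probability space $(\mathcal A,\phi)$ and let $(X_{i,j})_{i\in[m],\,j\in[n_i]}\subseteq\mathcal A$, $n=n_1+\dots+n_m$. Then $$K_m\Big(\prod_{j=1}^{n_1}X_{1,j},\prod_{j=1}^{n_2}X_{2,j},\dots,\prod_{j=1}^{n_m}X_{m,j}\Big)=\sum_{\substack{\sigma\in\Pi_n\\ \sigma\ \text{indecomposable}}}K_\sigma(X_{1,1},\dots,X_{1,n_1},X_{2,1},\dots,X_{m,n_m}),$$ where products are taken in increasing order of $j$.
   Context: A noncommutative probability space is a pair $(\mathcal A,\phi)$ of a complex unital algebra $\mathcal A$ and a unital linear functional $\phi$. An exchangeability system $\mathcal E$ for $(\mathcal A,\phi)$ consists of a noncommutative probability space $(\mathcal U,\tilde\phi)$ and a family $(\iota_k)_{k\in\mathbb N}$ of embeddings (injective unital algebra homomorphisms) $\iota_k:\mathcal A\to\mathcal A_k\subseteq\mathcal U$ with $\tilde\phi\circ\iota_k=\phi$; write $X^{(k)}=\iota_k(X)$. It is required that for all $X_1,\dots,X_n\in\mathcal A$, indices $i_1,\dots,i_n\in\mathbb N$ and bijections $\sigma$ of $\mathbb N$, $\tilde\phi(X_1^{(i_1)}\cdots X_n^{(i_n)})=\tilde\phi(X_1^{(\sigma(i_1))}\cdots X_n^{(\sigma(i_n))})$; this value depends only on the kernel of $j\mapsto i_j$ and for a partition $\pi$ is denoted $\phi_\pi(X_1,\dots,X_n)$. $\Pi_n$ is the lattice of set partitions of $[n]$ under refinement with Möbius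 function $\mu$ and join $\vee$; $K_\pi=\sum_{\sigma\le\pi}\phi_\sigma\,\mu(\sigma,\pi)$, and $K_m(Y_1,\dots,Y_m)=K_{\hat1_m}(Y_1,\dots,Y_m)$ (equivalently $\frac1m\tilde\phi(Y_1^\omega\cdots Y_m^\omega)$ with $Y^\omega=\sum_{k=1}^m\omega^kY^{(k)}$, $\omega$ a primitive $m$-th root of unity). Identify $[n]$ with $\{(i,j):i\in[m],j\in[n_i]\}$ in lexicographic order. Each $\pi\in\Pi_m$ induces $\tilde\pi\in\Pi_n$ with blocks $\{(i,j):i\in B,j\in[n_i]\}$ for $B\in\pi$. A partition $\sigma\in\Pi_n$ is indecomposable if $\sigma\vee\tilde{\hat0}_m=\tilde{\hat1}_m$, where $\hat0_m,\hat1_m$ are the minimal and maximal elements of $\Pi_m$. *)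

(* Defs.v *)
From HB Require Import structures.
From mathcomp Require Import all_boot all_order all_algebra.
From mathcomp Require Import complex.
From mathcomp Require Import reals.
Set Implicit Arguments. Unset Strict Implicit. Unset Printing Implicit Defensive.
Import Order.TTheory GRing.Theory Num.Theory.
Local Open Scope ring_scope.

Definition is_part (n : nat) (P : {set {set 'I_n}}) : bool :=
  partition P [set: 'I_n].

Definition refines (n : nat) (s p : {set {set 'I_n}}) : bool :=
  [forall B in s, exists C in p, B \subset C].

Definition hat0 (n : nat) : {set {set 'I_n}} := [set [set i] | i : 'I_n].
Definition hat1 (n : nat) : {set {set 'I_n}} := [set [set: 'I_n]] :\ set0.

Definition join_is (n : nat) (s t r : {set {set 'I_n}}) : bool :=
  [&& is_part r, refines s r, refines t r &
      [forall r' : {set {set 'I_n}},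
         [&& is_part r', refines s r' & refines t r'] ==> refines r r']].

(* The fuel #|{set {set 'I_n}}| bounds the length
   of every strict chain in Pi_n, so it never runs out. *)
Fixpoint mobius_aux (R : pzRingType) (n : nat) (fuel : nat)
    (s p : {set {set 'I_n}}) : R :=
  match fuel with
  | 0 => 0
  | f.+1 =>
      if s == p then 1
      else if refines s p then
        - \sum_(z : {set {set 'I_n}} |
                 [&& is_part z, refines s z, refines z p & z != p])
            mobius_aux R f s z
      else 0
  end.

Definition mobius (R : pzRingType) (n : nat) (s p : {set {set 'I_n}}) : R :=
  mobius_aux R #|{: {set {set 'I_n}}}| s p.

(* phi_pi(X_1,...,X_n) = phit(X_1^(i_1) ... X_n^(i_n)) where j |-> i_j has
   kernel pi; as representative we label each block by its rank in the
   enumeration of {set 'I_n} (an injective labelling of the blocks). *)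
Definition phi_part (C A U : pzRingType) (phit : U -> C) (iota : nat -> A -> U)
    (n : nat) (X : 'I_n -> A) (P : {set {set 'I_n}}) : C :=
  phit (\prod_(j < n) iota (nat_of_ord (enum_rank (pblock P j))) (X j)).

Definition K_part (C A U : pzRingType) (phit : U -> C) (iota : nat -> A -> U)
    (n : nat) (X : 'I_n -> A) (P : {set {set 'I_n}}) : C :=
  \sum_(S : {set {set 'I_n}} | is_part S && refines S P)
     phi_part phit iota X S * mobius C S P.

Definition K_m (C A U : pzRingType) (phit : U -> C) (iota : nat -> A -> U)
    (m : nat) (Y : 'I_m -> A) : C :=
  K_part phit iota Y (hat1 m).

(* The family (X_{i,j}) is given as Xs : seq (seq A) with Xs`_i = [X_{i,1};...;X_{i,n_i}];
   position k of flatten Xs corresponds to the pair whose first coordinate is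
   reshape_index (shape Xs) k. *)

Definition flatN (A : Type) (Xs : seq (seq A)) : nat := size (flatten Xs).

(* tilde pi : the partition of [n] with blocks {(i,j) : i in B} for B in pi *)
Definition tilde (A : Type) (Xs : seq (seq A)) (P : {set {set 'I_(size Xs)}})
    : {set {set 'I_(flatN Xs)}} :=
  [set [set k : 'I_(flatN Xs) |
          [exists i : 'I_(size Xs), (i \in B) && (nat_of_ord i == reshape_index (shape Xs) k)]]
   | B : {set 'I_(size Xs)} in P].

Arguments tilde {A} Xs P.

Definition indecomposable (A : Type) (Xs : seq (seq A))
    (S : {set {set 'I_(flatN Xs)}}) : bool :=
  join_is S (tilde Xs (hat0 (size Xs))) (tilde Xs (hat1 (size Xs))).

Arguments indecomposable {A} Xs S.

Definition exchangeability_system (R : realType) (A U : algType R[i])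
    (phi : A -> R[i]) (phit : U -> R[i]) (iota : nat -> A -> U) : Prop :=
  (forall (a : R[i]) x y, phi (a *: x + y) = a * phi x + phi y) /\ phi 1 = 1 /\
  (forall (a : R[i]) x y, phit (a *: x + y) = a * phit x + phit y) /\ phit 1 = 1 /\
  (forall k, (forall (a : R[i]) x y, iota k (a *: x + y) = a *: iota k x + iota k y) /\
             (forall x y, iota k (x * y) = iota k x * iota k y) /\
             iota k 1 = 1 /\ injective (iota k)) /\
  (forall k x, phit (iota k x) = phi x) /\
  (forall (n : nat) (X : 'I_n -> A) (idx : 'I_n -> nat) (s : nat -> nat),
      bijective s ->
      phit (\prod_(j < n) iota (idx j) (X j)) =
      phit (\prod_(j < n) iota (s (idx j)) (X j))).

(* Main.v *)
Require Import Defs.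
From HB Require Import structures.
From mathcomp Require Import all_boot all_order all_algebra.
From mathcomp Require Import complex.
From mathcomp Require Import reals.
From mathcomp Require Import zify fingroup perm.
Import Order.TTheory GRing.Theory Num.Theory.
Local Open Scope ring_scope.
Set Implicit Arguments. Unset Strict Implicit. Unset Printing Implicit Defensive.

Section PartBasics.
Variable n : nat.
Local Notation T := {set {set 'I_n}}.
Implicit Types P Q S : T.

Lemma part_cover P : is_part P -> cover P = setT.
Proof. by case/and3P => /eqP. Qed.
Lemma part_triv P : is_part P -> trivIset P.
Proof. by case/and3P. Qed.
Lemma part_set0 P : is_part P -> set0 \notin P.
Proof. by case/and3P. Qed.
Lemma pblock_in P x : is_part P -> pblock P x \in P.
Proof. by move=> hP; apply: pblock_mem; rewrite part_cover. Qed.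
Lemma pblock_self P x : is_part P -> x \in pblock P x.
Proof. by move=> hP; rewrite mem_pblock part_cover. Qed.
Lemma pblock_eq P B x : is_part P -> B \in P -> x \in B -> pblock P x = B.
Proof. by move=> hP; apply: def_pblock; apply: part_triv. Qed.
Lemma pblock_same P x y : is_part P -> y \in pblock P x -> pblock P y = pblock P x.
Proof. by move=> hP; apply: same_pblock; apply: part_triv. Qed.

Lemma is_partI P : (forall x, exists2 B, B \in P & x \in B) ->
  (forall B C x, B \in P -> C \in P -> x \in B -> x \in C -> B = C) ->
  set0 \notin P -> is_part P.
Proof.
move=> hc ht h0; apply/and3P; split => //.
- rewrite eqEsubset subsetT /=; apply/subsetP => x _.
  by have [B PB xB] := hc x; apply/bigcupP; exists B.
- apply/trivIsetP => B C PB PC hBC.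
  rewrite -setI_eq0; apply/eqP/setP => x; rewrite !inE.
  apply/negbTE/negP => /andP[xB xC]; by move: hBC; rewrite (ht B C x) ?eqxx.
Qed.

Lemma refines_refl P : refines P P.
Proof. by apply/forall_inP => B PB; apply/exists_inP; exists B. Qed.

Lemma refines_trans P Q S : refines P Q -> refines Q S -> refines P S.
Proof.
move=> /forall_inP h1 /forall_inP h2; apply/forall_inP => B PB.
have /exists_inP[C QC BC] := h1 B PB; have /exists_inP[D SD CD] := h2 C QC.
by apply/exists_inP; exists D => //; apply: subset_trans CD.
Qed.

Lemma refinesP P Q : is_part P -> is_part Q ->
  reflect (forall x y, y \in pblock P x -> y \in pblock Q x) (refines P Q).
Proof.
move=> hP hQ; apply: (iffP forall_inP).
- move=> h x y yP; have /exists_inP[C QC BC] := h _ (pblock_in x hP).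
  rewrite (pblock_eq hQ QC) ?(subsetP BC) //; exact: pblock_self.
- move=> h B PB; have : B != set0 by apply: contraNneq (part_set0 hP) => <-.
  case/set0Pn => x xB; apply/exists_inP; exists (pblock Q x); first exact: pblock_in.
  by apply/subsetP => y yB; apply: h; rewrite (pblock_eq hP PB xB).
Qed.

Lemma part_eq P Q : is_part P -> is_part Q ->
  (forall x, pblock P x = pblock Q x) -> P = Q.
Proof.
move=> hP hQ h; apply/eqP; rewrite eqEsubset; apply/andP; split; apply/subsetP => B PB.
- have : B != set0 by apply: contraNneq (part_set0 hP) => <-.
  by case/set0Pn => x xB; rewrite -(pblock_eq hP PB xB) h pblock_in.
- have : B != set0 by apply: contraNneq (part_set0 hQ) => <-.
  by case/set0Pn => x xB; rewrite -(pblock_eq hQ PB xB) -h pblock_in.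
Qed.

Lemma refines_antisym P Q : is_part P -> is_part Q -> refines P Q -> refines Q P -> P = Q.
Proof.
move=> hP hQ /(refinesP hP hQ) h1 /(refinesP hQ hP) h2; apply: part_eq => // x.
apply/setP => y; apply/idP/idP; [exact: h1 | exact: h2].
Qed.

End PartBasics.

Section Mob.
Variable (C : pzRingType) (n : nat).
Local Notation T := {set {set 'I_n}}.
Implicit Types P Q S s p z : T.

Definition cnt p := #|[set z : T | is_part z && refines z p]|.

Lemma cnt_pos p : is_part p -> (0 < cnt p)%N.
Proof. by move=> hp; apply/card_gt0P; exists p; rewrite inE hp refines_refl. Qed.

Lemma cnt_lt z p : is_part z -> is_part p -> refines z p -> z != p -> (cnt z < cnt p)%N.
Proof.
move=> hz hp zp zne; apply: proper_card; apply/properP; split.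
  apply/subsetP => w; rewrite !inE => /andP[-> wz] /=; exact: refines_trans wz zp.
exists p; first by rewrite inE hp refines_refl.
rewrite inE hp /=; apply/negP => pz; move/negP: zne; apply.
by apply/eqP; apply: refines_antisym.
Qed.

Lemma mob_auxS f s p : mobius_aux C f.+1 s p =
  if s == p then 1 else if refines s p then
   - \sum_(z : T | [&& is_part z, refines s z, refines z p & z != p]) mobius_aux C f s z
  else 0.
Proof. by []. Qed.

Lemma fuel_stable f : forall s p, is_part p -> (cnt p <= f)%N ->
  mobius_aux C f s p = mobius_aux C f.+1 s p.
Proof.
elim: f => [|f IH] s p hp hf.
  by move: (cnt_pos hp) hf; case: (cnt p).
rewrite mob_auxS [RHS]mob_auxS; case: eqP => // _; case: ifP => // _.
congr (- _); apply: eq_bigr => z /and4P[hz _ zp zne]; apply: IH => //.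
by have := leq_trans (cnt_lt hz hp zp zne) hf; rewrite ltnS.
Qed.

Lemma cnt_le p : (cnt p <= #|{: T}|)%N.
Proof. exact: max_card. Qed.

Lemma mobiusE s p : is_part p -> mobius C s p =
  if s == p then 1 else if refines s p then
   - \sum_(z : T | [&& is_part z, refines s z, refines z p & z != p]) mobius C s z
  else 0.
Proof.
move=> hp; rewrite /mobius; have := cnt_le p; move: #|{: T}| => N.
case: N => [|N] hN; first by move: (cnt_pos hp) hN; case: (cnt p).
rewrite mob_auxS; case: eqP => // _; case: ifP => // _.
congr (- _); apply: eq_bigr => z /and4P[hz _ zp zne]; apply: fuel_stable => //.
by have := leq_trans (cnt_lt hz hp zp zne) hN; rewrite ltnS.
Qed.

Lemma mob_refl p : is_part p -> mobius C p p = 1.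
Proof. by move=> hp; rewrite mobiusE // eqxx. Qed.

Lemma mob_nref s p : is_part p -> ~~ refines s p -> mobius C s p = 0.
Proof.
move=> hp nsp; rewrite mobiusE // (negbTE nsp); case: eqP => // e.
by move: nsp; rewrite e refines_refl.
Qed.

Lemma mob_left s t : is_part s -> is_part t ->
  \sum_(z : T | [&& is_part z, refines s z & refines z t]) mobius C s z = (s == t)%:R.
Proof.
move=> hs ht; case: (boolP (refines s t)) => st; last first.
  rewrite big1; last first.
    by move=> z /and3P[_ sz zt]; move: st; rewrite (refines_trans sz zt).
  case: eqP => // e; by move: st; rewrite e refines_refl.
rewrite (bigD1 t) /=; last by rewrite ht st refines_refl.
case: eqP => [e|/eqP ne].
  subst t; rewrite mob_refl // big1 ?addr0 //.
  move=> z /andP[/and3P[hz sz zt] zne]; move: zne.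
  by rewrite (refines_antisym hz hs zt sz) eqxx.
rewrite mobiusE // (negbTE ne) st.
rewrite (eq_bigl (fun z => [&& is_part z, refines s z, refines z t & z != t])).
  by rewrite addNr.
by move=> z; rewrite !andbA.
Qed.

End Mob.

Section Dual.
Variable (C : comUnitRingType) (n : nat).
Local Notation T := {set {set 'I_n}}.
Implicit Types P Q S s p z t : T.

Let zf s t : C := ((s == t) || [&& is_part s, is_part t & refines s t])%:R.
Let mf s t : C := if is_part s && is_part t then mobius C s t else (s == t)%:R.

Let sum_delta (F : T -> C) s : \sum_(x : T) (s == x)%:R * F x = F s.
Proof.
rewrite (bigD1 s) //= eqxx mul1r big1 ?addr0 // => x /negbTE; rewrite eq_sym => ->.
by rewrite mul0r.
Qed.

Let sum_delta' (F : T -> C) t : \sum_(x : T) F x * (x == t)%:R = F t.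
Proof.
rewrite (bigD1 t) //= eqxx mulr1 big1 ?addr0 // => x /negbTE ->.
by rewrite mulr0.
Qed.

Let left_id s t : \sum_(x : T) mf s x * zf x t = (s == t)%:R.
Proof.
rewrite /mf /zf; case: (boolP (is_part s)) => hs /=; last first.
  rewrite sum_delta (negbTE hs) /=; by case: (s == t).
case: (boolP (is_part t)) => ht; last first.
  under eq_bigr => x _ do rewrite andFb andbF orbF.
  by rewrite sum_delta' (negbTE ht).
rewrite -(mob_left C hs ht) [RHS]big_mkcond /=; apply: eq_bigr => x _.
case: (boolP (is_part x)) => hx /=; last first.
  have -> : (s == x) = false by apply/negbTE; apply: contraNneq hx => <-.
  by rewrite mul0r.
have -> : (x == t) || refines x t = refines x t.
  by case: eqP => // ->; rewrite refines_refl.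
case: (boolP (refines s x)) => sx /=; last by rewrite mob_nref // mul0r.
by case: (refines x t); rewrite ?mulr1 ?mulr0.
Qed.

Lemma mob_right s t : is_part s -> is_part t ->
  \sum_(z : T | is_part z && refines s z) mobius C z t = (s == t)%:R.
Proof.
move=> hs ht.
pose M := \matrix_(i < #|{: T}|, j < #|{: T}|) mf (enum_val i) (enum_val j).
pose Z := \matrix_(i < #|{: T}|, j < #|{: T}|) zf (enum_val i) (enum_val j).
have sumE (F : T -> C) : \sum_(k < #|{: T}|) F (enum_val k) = \sum_(x : T) F x.
  by rewrite (reindex enum_rank) //=; [apply: eq_bigr => x _; rewrite enum_rankK
     | exists enum_val => x _; rewrite ?enum_valK ?enum_rankK].
have MZ : M *m Z = 1%:M.
  apply/matrixP => i j; rewrite !mxE.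
  under eq_bigr => k _ do rewrite !mxE.
  rewrite (sumE (fun x => mf (enum_val i) x * zf x (enum_val j))) left_id.
  by rewrite (inj_eq enum_val_inj).
have := mulmx1C MZ => /matrixP /(_ (enum_rank s) (enum_rank t)).
rewrite !mxE (inj_eq enum_rank_inj).
under eq_bigr => k _ do rewrite !mxE.
rewrite (sumE (fun x => zf (enum_val (enum_rank s)) x * mf x (enum_val (enum_rank t)))).
rewrite !enum_rankK => <-; rewrite big_mkcond /=; apply: eq_bigr => x _.
rewrite /zf /mf hs ht /= andbT.
case: (boolP (is_part x)) => hx /=; last first.
  have -> : (s == x) = false by apply/negbTE; apply: contraNneq hx => <-.
  by rewrite mul0r.
have -> : (s == x) || refines s x = refines s x.
  by case: eqP => // ->; rewrite refines_refl.
by case: (refines s x); rewrite ?mul1r ?mul0r.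
Qed.

End Dual.

Lemma moment_cumulant (C A U : pzRingType) (phit : U -> C) (iota : nat -> A -> U)
    (n : nat) (X : 'I_n -> A) (t : {set {set 'I_n}}) : is_part t ->
  \sum_(s : {set {set 'I_n}} | is_part s && refines s t) K_part phit iota X s =
  phi_part phit iota X t.
Proof.
move=> ht; rewrite /K_part.
rewrite (exchange_big_dep (fun r => is_part r && refines r t)) /=; last first.
  by move=> s r /andP[hs st] /andP[hr rs]; rewrite hr (refines_trans rs st).
under eq_bigr => r /andP[hr rt].
  rewrite (eq_bigl (fun s => [&& is_part s, refines r s & refines s t])); last first.
    by move=> s; rewrite hr; case: (is_part s); case: (refines s t); case: (refines r s).
  rewrite -big_distrr /= mob_left //.
over.
rewrite (bigD1 t) /=; last by rewrite ht refines_refl.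
rewrite eqxx mulr1 big1 ?addr0 // => r /andP[_ /negbTE ->]; by rewrite mulr0.
Qed.

Section Hats.
Variable m : nat.
Implicit Types P : {set {set 'I_m}}.

Lemma hat1T (i : 'I_m) : [set: 'I_m] \in hat1 m.
Proof.
rewrite /hat1 !inE eqxx andbT; apply/set0Pn; by exists i.
Qed.

Lemma hat1_in B : B \in hat1 m -> B = setT.
Proof. by rewrite /hat1 !inE => /andP[_ /eqP]. Qed.

Lemma hat0_part : is_part (hat0 m).
Proof.
apply: is_partI.
- by move=> x; exists [set x]; [apply: imset_f | rewrite inE].
- move=> B C x /imsetP[a _ ->] /imsetP[b _ ->]; rewrite !inE => /eqP-> /eqP->. by [].
- apply/imsetP => -[a _] /setP /(_ a); by rewrite !inE eqxx.
Qed.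

Lemma hat1_part : is_part (hat1 m).
Proof.
apply: is_partI.
- by move=> x; exists [set: 'I_m]; [apply: hat1T x | rewrite inE].
- by move=> B C x /hat1_in-> /hat1_in->.
- by rewrite /hat1 !inE eqxx.
Qed.

Lemma pblock_hat0 i : pblock (hat0 m) i = [set i].
Proof. by apply: pblock_eq; [exact: hat0_part | apply: imset_f | rewrite inE]. Qed.

Lemma pblock_hat1 i : pblock (hat1 m) i = setT.
Proof. by apply: pblock_eq; [exact: hat1_part | apply: hat1T i | rewrite inE]. Qed.

Lemma refines_hat1 P : is_part P -> refines P (hat1 m).
Proof.
move=> hP; apply/(refinesP hP hat1_part) => x y _; by rewrite pblock_hat1 inE.
Qed.

Lemma hat0_refines P : is_part P -> refines (hat0 m) P.
Proof.
move=> hP; apply/(refinesP hat0_part hP) => x y; rewrite pblock_hat0 inE => /eqP->.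
exact: pblock_self.
Qed.

End Hats.

Section Tilde.
Variables (A : Type) (Xs : seq (seq A)).
Hypothesis hpos : forall i, (i < size Xs)%N -> (0 < size (nth [::] Xs i))%N.
Local Notation m := (size Xs).
Local Notation N := (flatN Xs).

Lemma rk_proof (k : 'I_N) : (reshape_index (shape Xs) k < m)%N.
Proof.
have := @reshape_indexP (shape Xs) k; rewrite size_map; apply.
by rewrite -size_flatten; exact: ltn_ord.
Qed.

Definition rk (k : 'I_N) : 'I_m := Ordinal (rk_proof k).

Lemma rk_surj (i : 'I_m) : exists k, rk k = i.
Proof.
have hc : (0 < nth 0 (shape Xs) i)%N by rewrite nth_shape; apply: hpos.
have hk : (flatten_index (shape Xs) i 0 < N)%N.
  by rewrite /flatN size_flatten; apply: flatten_indexP.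
exists (Ordinal hk); apply: val_inj => /=; exact: flatten_indexKl.
Qed.

Definition pre (B : {set 'I_m}) : {set 'I_N} := [set k | rk k \in B].

Lemma pre_inj : injective pre.
Proof.
move=> B C /setP h; apply/setP => i; have [k <-] := rk_surj i.
by have := h k; rewrite !inE.
Qed.

Lemma tildeE P : tilde Xs P = [set pre B | B in P].
Proof.
apply: eq_imset => B; apply/setP => k; rewrite !inE; apply/existsP/idP.
- by case=> i /andP[iB /eqP hi]; have -> : rk k = i by apply: val_inj.
- by move=> h; exists (rk k); rewrite h eqxx.
Qed.

Lemma tilde_part P : is_part P -> is_part (tilde Xs P).
Proof.
move=> hP; rewrite tildeE; apply: is_partI.
- move=> k; exists (pre (pblock P (rk k))); first by apply: imset_f; exact: pblock_in.
  by rewrite inE pblock_self.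
- move=> _ _ k /imsetP[B PB ->] /imsetP[C PC ->]; rewrite !inE => kB kC.
  by rewrite -(pblock_eq hP PB kB) -(pblock_eq hP PC kC).
- apply/imsetP => -[B PB] h; move: (part_set0 hP); rewrite (_ : set0 = B) ?PB //.
  apply: pre_inj; rewrite -h; apply/setP => k; by rewrite !inE.
Qed.

Lemma pblock_tilde P k : is_part P -> pblock (tilde Xs P) k = pre (pblock P (rk k)).
Proof.
move=> hP; apply: pblock_eq; first exact: tilde_part.
  by rewrite tildeE; apply: imset_f; exact: pblock_in.
by rewrite inE pblock_self.
Qed.

Lemma tilde_mono P Q : refines P Q -> refines (tilde Xs P) (tilde Xs Q).
Proof.
rewrite !tildeE => /forall_inP h; apply/forall_inP => _ /imsetP[B PB ->].
have /exists_inP[C QC BC] := h B PB; apply/exists_inP; exists (pre C).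
  exact: imset_f.
by apply/subsetP => k; rewrite !inE => /(subsetP BC).
Qed.

Lemma tilde_refl P Q : refines (tilde Xs P) (tilde Xs Q) -> refines P Q.
Proof.
rewrite !tildeE => /forall_inP h; apply/forall_inP => B PB.
have /exists_inP[_ /imsetP[C QC ->] BC] := h _ (imset_f pre PB).
apply/exists_inP; exists C => //; apply/subsetP => i iB.
have [k hk] := rk_surj i; have := subsetP BC k; rewrite !inE hk; exact.
Qed.

Variable sg : {set {set 'I_N}}.
Hypothesis hsg : is_part sg.

Definition erel : rel 'I_m := fun i j =>
  [exists k, exists k', [&& k' \in pblock sg k, rk k == i & rk k' == j]].

Lemma erel_sym : symmetric erel.
Proof.
move=> i j; apply/existsP/existsP => -[k /existsP[k' /and3P[kk hi hj]]];
  exists k'; apply/existsP; exists k; rewrite hi hj andbT;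
  by rewrite (pblock_same hsg kk) pblock_self.
Qed.

Definition rho := equivalence_partition (connect erel) setT.

Lemma rho_equiv : {in [set: 'I_m] & &, equivalence_rel (connect erel)}.
Proof.
move=> x y z _ _ _; split; first exact: connect0.
move=> hxy; apply/idP/idP => h.
  by apply: connect_trans h; rewrite (sym_connect_sym erel_sym).
exact: connect_trans hxy h.
Qed.

Lemma rho_part : is_part rho.
Proof. exact: (equivalence_partitionP rho_equiv). Qed.

Lemma pblock_rho i j : (j \in pblock rho i) = connect erel i j.
Proof. by rewrite (pblock_equivalence_partition rho_equiv) ?inE. Qed.

Lemma connect_ind (a : pred 'I_m) :
  (forall x y, erel x y -> a x -> a y) -> forall x y, connect erel x y -> a x -> a y.
Proof.
move=> cl x _ /connectP[p e_p ->].
by elim: p x e_p => //= y p IHp x /andP[/cl h /IHp]; move=> h2 /h; exact: h2.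
Qed.

Lemma rho_key P : is_part P -> refines sg (tilde Xs P) = refines rho P.
Proof.
move=> hP; have htP := tilde_part hP.
apply/(refinesP hsg htP)/(refinesP rho_part hP).
- move=> h i j; rewrite pblock_rho => /connect_ind; apply; last exact: pblock_self.
  move=> x y /existsP[k /existsP[k' /and3P[kk /eqP hx /eqP hy]]] xi.
  have := h k k' kk; rewrite pblock_tilde // inE hx hy => yx.
  by rewrite -(pblock_same hP xi).
- move=> h k k' kk; rewrite pblock_tilde // inE; apply: h; rewrite pblock_rho.
  by apply: connect1; apply/existsP; exists k; apply/existsP; exists k'; rewrite kk !eqxx.
Qed.

Lemma indecE : indecomposable Xs sg = (rho == hat1 m).
Proof.
have h1 := tilde_part (hat1_part m).
rewrite /indecomposable /join_is h1 rho_key ?hat1_part // refines_hat1 ?rho_part //.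
rewrite tilde_mono ?hat0_refines ?hat1_part //=.
apply/forallP/eqP.
- move=> /(_ (tilde Xs rho)); rewrite tilde_part ?rho_part // rho_key ?rho_part //.
  rewrite refines_refl tilde_mono ?hat0_refines ?rho_part //= => /tilde_refl h.
  apply: refines_antisym => //; [exact: rho_part | exact: hat1_part | exact: refines_hat1 rho_part].
- move=> erho t; apply/implyP => /and3P[ht st zt].
  apply/(refinesP h1 ht) => k k' _.
  pose a := [pred i | [forall k'', (rk k'' == i) ==> (k'' \in pblock t k)]].
  have cl : forall x y, erel x y -> a x -> a y.
    move=> x y /existsP[k1 /existsP[k2 /and3P[kk /eqP hx /eqP hy]]] /forallP ax.
    apply/forallP => k''; apply/implyP => /eqP hk''.
    have k1t : k1 \in pblock t k by have := ax k1; rewrite hx eqxx.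
    have k2t : k2 \in pblock t k1 by move/(refinesP hsg ht): st; apply.
    have : k'' \in pblock (tilde Xs (hat0 m)) k2.
      by rewrite pblock_tilde ?hat0_part // pblock_hat0 !inE hk'' hy.
    move/(refinesP (tilde_part (hat0_part m)) ht): zt => /[apply].
    by rewrite (pblock_same ht k2t) (pblock_same ht k1t).
  have : a (rk k).
    apply/forallP => k''; apply/implyP => /eqP hk''.
    move/(refinesP (tilde_part (hat0_part m)) ht): zt; apply.
    by rewrite pblock_tilde ?hat0_part // pblock_hat0 !inE hk''.
  have : connect erel (rk k) (rk k') by rewrite -pblock_rho erho pblock_hat1 inE.
  move/connect_ind => /(_ a cl) /[apply] /forallP /(_ k').
  by rewrite eqxx.
Qed.

End Tilde.

Lemma ext_bij a b (g : 'I_a -> 'I_b) : injective g ->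
  exists s : nat -> nat, bijective s /\ forall j : 'I_a, s j = g j.
Proof.
move=> ginj.
have hab : (a <= b)%N by have := leq_card g ginj; rewrite !card_ord.
pose Img := g @: [set: 'I_a].
pose L := enum (~: Img).
have sL : size L = (b - a)%N.
  have e := cardsC Img; rewrite card_imset // cardsT !card_ord in e.
  by rewrite /L -cardE; apply: (@addnI a); rewrite e subnKC.
pose h (x : 'I_b) : 'I_b :=
  if insub (val x) is Some j then g j else nth x L (x - a).
have hL (x : 'I_b) : ~~ (x < a)%N -> h x = nth x L (x - a) /\ (x - a < size L)%N.
  move=> hx; rewrite /h; case: insubP => [j hj _|_]; first by rewrite hj in hx.
  split => //; rewrite sL; have := ltn_ord x; lia.
have hG (x : 'I_b) (hx : (x < a)%N) : h x = g (Ordinal hx).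
  rewrite /h; case: insubP => [j _ hj|]; last by rewrite hx.
  by congr g; apply: val_inj.
have hinj : injective h.
  move=> x y; case: (boolP (x < a)%N) => hx; case: (boolP (y < a)%N) => hy.
  - rewrite (hG x hx) (hG y hy) => /ginj [] h1; exact: val_inj.
  - rewrite (hG x hx); have [-> hyL] := hL y hy => e.
    have : g (Ordinal hx) \in Img by apply: imset_f.
    by rewrite e => hin; move: (mem_nth y hyL); rewrite mem_enum inE hin.
  - rewrite (hG y hy); have [-> hxL] := hL x hx => e.
    have : g (Ordinal hy) \in Img by apply: imset_f.
    by rewrite -e => hin; move: (mem_nth x hxL); rewrite mem_enum inE hin.
  - have [-> hxL] := hL x hx; have [-> hyL] := hL y hy.
    rewrite (set_nth_default y x hxL) => e.
    have := e; move/eqP; rewrite nth_uniq ?enum_uniq // => /eqP e2.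
    apply: val_inj; change (nat_of_ord x = nat_of_ord y); lia.
pose p := perm hinj.
pose s (y : nat) : nat := if insub y is Some x then val (p x) else y.
pose t (y : nat) : nat := if insub y is Some x then val ((p^-1)%g x) else y.
have E (x : 'I_b) : insub (val x) = Some x by apply: valK.
exists s; split.
  exists t => y; rewrite /s /t.
  - case: (ltnP y b) => hy; last by rewrite !insubN // -leqNgt.
    have -> : y = val (Ordinal hy) by [].
    by rewrite E /= E permK.
  - case: (ltnP y b) => hy; last by rewrite !insubN // -leqNgt.
    have -> : y = val (Ordinal hy) by [].
    by rewrite E /= E permKV.
move=> j; rewrite /s.
have hj : (j < b)%N by apply: leq_trans hab; exact: ltn_ord.
have -> : val j = val (Ordinal hj) by [].
rewrite E permE (hG (Ordinal hj) (ltn_ord j)); congr (val (g _)); exact: val_inj.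
Qed.

Lemma reshape_small (sz : nat) sh k : (k < sz)%N -> reshape_index (sz :: sh) k = 0%N.
Proof.
by move=> hk; rewrite /reshape_index /=; have -> : (k.+1 - sz = 0)%N by lia.
Qed.

Lemma reshape_big (sz : nat) sh k :
  reshape_index (sz :: sh) (k + sz) = (reshape_index sh k).+1.
Proof.
rewrite /reshape_index /=; have -> : ((k + sz).+1 - sz = k.+1)%N by lia.
by [].
Qed.

Lemma flat_prod (A : nmodType) (U : pzSemiRingType) (Xs : seq (seq A))
    (F : nat -> A -> U) :
  \prod_(0 <= i < size Xs) \prod_(x <- nth [::] Xs i) F i x =
  \prod_(0 <= k < size (flatten Xs))
     F (reshape_index (shape Xs) k) (nth 0 (flatten Xs) k).
Proof.
elim: Xs F => [|s Xs IH] F; first by rewrite !big_geq.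
rewrite big_nat_recl //= IH size_cat (big_cat_nat _ (leq_addr _ _)) //=.
rewrite (big_nth 0) [X in _ = X * _]big_nat_cond [X in X * _ = _]big_nat_cond.
congr (_ * _).
  apply: eq_bigr => k /andP[/andP[_ hk] _].
  by rewrite reshape_small // nth_cat hk.
rewrite -{1}[size s]add0n big_addn addKn; apply: eq_bigr => k _.
by rewrite reshape_big nth_cat ltnNge leq_addl /= addnK.
Qed.

Section PhiTilde.
Variables (C A U : pzRingType) (phit : U -> C) (iota : nat -> A -> U).
Hypothesis hmul : forall k x y, iota k (x * y) = iota k x * iota k y.
Hypothesis hone : forall k, iota k 1 = 1.
Hypothesis hexch : forall (n : nat) (X : 'I_n -> A) (idx : 'I_n -> nat) (s : nat -> nat),
      bijective s ->
      phit (\prod_(j < n) iota (idx j) (X j)) =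
      phit (\prod_(j < n) iota (s (idx j)) (X j)).
Variable Xs : seq (seq A).
Hypothesis hpos : forall i, (i < size Xs)%N -> (0 < size (nth [::] Xs i))%N.

Lemma iota_prod k (s : seq A) : iota k (\prod_(x <- s) x) = \prod_(x <- s) iota k x.
Proof.
elim: s => [|x s IH]; first by rewrite !big_nil hone.
by rewrite !big_cons hmul IH.
Qed.

Lemma phi_tilde P : is_part P ->
  phi_part phit iota (fun i : 'I_(size Xs) => \prod_(x <- nth [::] Xs i) x) P =
  phi_part phit iota (fun k : 'I_(flatN Xs) => nth 0 (flatten Xs) k) (tilde Xs P).
Proof.
move=> hP; rewrite /phi_part.
pose lab1 (i : 'I_(size Xs)) : nat := enum_rank (pblock P i).
pose L (i : nat) : nat := if insub i is Some i' then lab1 i' else 0%N.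
have LE (i : 'I_(size Xs)) : L i = enum_rank (pblock P i) :> nat.
  by rewrite /L (_ : insub (val i) = Some i) //; apply: valK.
under eq_bigr => i _ do rewrite iota_prod -LE.
rewrite -(big_mkord xpredT (fun i => \prod_(x <- nth [::] Xs i) iota (L i) x)).
rewrite (flat_prod Xs (fun i x => iota (L i) x)).
rewrite (big_mkord xpredT (fun k => iota (L (reshape_index (shape Xs) k)) (nth 0 (flatten Xs) k))).
have rkE (k : 'I_(flatN Xs)) : reshape_index (shape Xs) k = rk k by [].
under eq_bigr => k _ do rewrite rkE LE.

pose g (j : 'I_#|{: {set 'I_(size Xs)}}|) : 'I_#|{: {set 'I_(flatN Xs)}}| :=
  enum_rank (pre (enum_val j)).
have ginj : injective g.
  by move=> j1 j2 /enum_rank_inj /(pre_inj hpos) /enum_val_inj.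
have [s [sbij sE]] := ext_bij ginj.
rewrite (hexch _ (fun k => lab1 (rk k)) sbij).
congr phit; apply: eq_bigr => k _; congr (iota _ _).
rewrite /lab1 sE /g enum_rankK pblock_tilde //.
Qed.

End PhiTilde.

Unset Implicit Arguments. Set Strict Implicit. Set Printing Implicit Defensive.

Theorem proposition3p3 (R : realType) (A U : algType R[i])
    (phi : A -> R[i]) (phit : U -> R[i]) (iota : nat -> A -> U)
    (Xs : seq (seq A)) :
  exchangeability_system phi phit iota ->
  (forall i, (i < size Xs)%N -> (0 < size (nth [::] Xs i))%N) ->
  K_m phit iota (fun i : 'I_(size Xs) => \prod_(x <- nth [::] Xs i) x) =
  \sum_(S : {set {set 'I_(flatN Xs)}} | is_part S && indecomposable Xs S)
     K_part phit iota (fun k : 'I_(flatN Xs) => nth 0 (flatten Xs) k) S.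
Proof.
move=> [_ [_ [_ [_ [hio [_ hexch]]]]]] hpos.
have hmul k x y : iota k (x * y) = iota k x * iota k y by have [_ [h _]] := hio k; apply: h.
have hone k : iota k 1 = 1 by have [_ [_ [h _]]] := hio k.
set X := (fun k : 'I_(flatN Xs) => nth 0 (flatten Xs) k).
rewrite /K_m {1}/K_part.
rewrite (eq_bigl (fun P => is_part P)); last first.
  by move=> P; case: (boolP (is_part P)) => //= hP; rewrite refines_hat1.
under eq_bigr => P hP.
  rewrite (phi_tilde hmul hone hexch hpos hP) -(moment_cumulant phit iota X (tilde_part hpos hP)).
  rewrite big_distrl /=.
over.
rewrite /= (exchange_big_dep (fun S => is_part S)) /=; last by move=> P S _ /andP[].
rewrite [RHS]big_mkcondr /=; apply: eq_bigr => S hS.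
rewrite -big_distrr /=.
rewrite (eq_bigl (fun P => is_part P && refines (rho S) P)); last first.
  move=> P /=; rewrite hS /=; case: (boolP (is_part P)) => //= hP.
  have := rho_key hpos hS hP. exact.
rewrite (mob_right _ (rho_part hS) (hat1_part _)) (indecE hpos hS).
by case: (_ == _); rewrite ?mulr1 ?mulr0.
Qed.
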